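(* Let $R$ be an integral domain satisfying (R$_1$), and let $S$ be an overring of $R$ such that $R \subseteq S$ satisfies going-down. Then $S$ satisfies (R$_1$), every height one prime of $S$ contracts to a height one prime of $R$, and contraction $Q \mapsto Q \cap R$ gives an injective map $\operatorname{Spec}^1(S) \to \operatorname{Spec}^1(R)$ whose image is exactly the set of height one primes $\mathfrak{p}$ of $R$ with $\mathfrak{p}S \neq S$.
   Context: All rings are commutative with identity; an overring of a domain $R$ is a ring between $R$ and its fraction field. A ring extension $A \subseteq B$ satisfies going-down if whenever $\mathfrak{p} \subset \mathfrak{q}$ are primes of $A$ and $Q$ is a prime of $B$ with $Q \cap A = \mathfrak{q}$, there is a prime $P \subseteq Q$ of $B$ with $P \cap A = \mathfrak{p}$. A ring satisfies (R$_1$) if its localization at every height one prime is a valuation domain. $\operatorname{Spec}^1(A)$ denotes the set of height one primes of $A$. *)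

(* Defs.v *)
(* An integral domain R is represented as a subring of its
   fraction field K (a fieldType); overrings are subrings of K containing R.
   Subsets of K are Prop-valued predicates K -> Prop. *)
From HB Require Import structures.
From mathcomp Require Import all_boot all_algebra.
Set Implicit Arguments. Unset Strict Implicit. Unset Printing Implicit Defensive.
Import GRing.Theory.
Local Open Scope ring_scope.

Section Defs.
Variable K : fieldType.
Implicit Types A B R S I P Q V : K -> Prop.

Definition subset_of A B := forall x, A x -> B x.
Definition seteq A B := forall x, A x <-> B x.
Definition strict_subset A B := subset_of A B /\ exists x, B x /\ ~ A x.

(* A is a subring (with 1) of K; being inside a field it is a domain *)
Definition subring A :=
  [/\ A 0, A 1, (forall x y, A x -> A y -> A (x - y)) &
      (forall x y, A x -> A y -> A (x * y))].

Definition frac_field_of R :=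
  subring R /\ forall x : K, exists a b, [/\ R a, R b, b != 0 & x = a / b].

Definition overring R S := subring S /\ subset_of R S.

Definition ideal_of A I :=
  [/\ subset_of I A, I 0, (forall x y, I x -> I y -> I (x + y)) &
      (forall a x, A a -> I x -> I (a * x))].

Definition prime_of A P :=
  [/\ ideal_of A P, ~ P 1 &
      forall x y, A x -> A y -> P (x * y) -> P x \/ P y].

Definition height_ge A P (n : nat) :=
  exists c : nat -> K -> Prop,
    [/\ (forall i, (i <= n)%N -> prime_of A (c i)),
        (forall i, (i < n)%N -> strict_subset (c i) (c i.+1)) &
        seteq (c n) P].

Definition height_one A P :=
  prime_of A P /\ height_ge A P 1 /\ ~ height_ge A P 2.

Definition localization A P (x : K) :=
  exists a s, [/\ A a, A s, ~ P s & x = a / s].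

Definition valuation_domain V := forall x : K, V x \/ V x^-1.

Definition R1 A :=
  forall P, height_one A P -> valuation_domain (localization A P).

Definition contraction Q R (x : K) := Q x /\ R x.

Definition extension P S (x : K) :=
  exists l : seq (K * K),
    (forall z, z \in l -> P z.1 /\ S z.2) /\ x = \sum_(z <- l) z.1 * z.2.

Definition going_down R S :=
  forall p q Q, prime_of R p -> prime_of R q -> subset_of p q ->
    prime_of S Q -> seteq (contraction Q R) q ->
    exists P, [/\ prime_of S P, subset_of P Q & seteq (contraction P R) p].

End Defs.

(* Main.v *)
Require Import Defs.
From mathcomp Require Import all_boot all_algebra.
From mathcomp Require classical_sets.
From Stdlib Require Import Classical.
Import GRing.Theory.

Local Open Scope ring_scope.

Lemma sr_add (K : fieldType) (A : K -> Prop) x y :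
  subring A -> A x -> A y -> A (x + y).
Proof.
move=> [A0 A1 Asub Amul] Ax Ay.
have: A (x - (0 - y)) by apply: (Asub) => //; apply: (Asub).
by rewrite sub0r opprK.
Qed.

Lemma sr_mul (K : fieldType) (A : K -> Prop) x y :
  subring A -> A x -> A y -> A (x * y).
Proof. by move=> [_ _ _ Amul]; apply: Amul. Qed.

Arguments sr_add {K A x y}.
Arguments sr_mul {K A x y}.

Lemma zero_prime (K : fieldType) (A : K -> Prop) :
  subring A -> prime_of A (fun x => x = 0).
Proof.
move=> [A0 A1 _ _]; split; [split| |].
- by move=> x ->.
- done.
- by move=> x y -> ->; rewrite addr0.
- by move=> a x _ ->; rewrite mulr0.
- by move/eqP; rewrite oner_eq0.
- by move=> x y _ _ /eqP; rewrite mulf_eq0 => /orP[/eqP|/eqP]; auto.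
Qed.

Lemma contr_prime (K : fieldType) (R S Q : K -> Prop) :
  subring R -> subset_of R S -> prime_of S Q -> prime_of R (contraction Q R).
Proof.
move=> sR RS [[QS Q0 Qadd Qmul] Q1 Qp]; split; [split| |].
- by move=> x [].
- by split=> //; case: sR.
- move=> x y [Qx Rx] [Qy Ry]; split; [exact: Qadd | exact: sr_add].
- move=> a x Ra [Qx Rx]; split; [apply: Qmul => //; exact: RS | exact: sr_mul].
- by case.
- move=> x y Rx Ry [Qxy _].
  by case: (Qp x y (RS _ Rx) (RS _ Ry) Qxy) => H; [left|right]; split.
Qed.

Lemma height1_nz (K : fieldType) (A P : K -> Prop) :
  height_ge A P 1 -> exists y, P y /\ y != 0.
Proof.
case=> c [cp cs ce].
have [_ [y [c1y nc0y]]] := cs 0%N isT.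
exists y; split; first exact: (ce y).1.
apply/eqP=> y0; apply: nc0y; rewrite y0.
by have [[_ ? _ _] _ _] := cp 0%N isT.
Qed.

Lemma mk_height1 (K : fieldType) (A P : K -> Prop) :
  subring A -> prime_of A P -> (exists y, P y /\ y != 0) -> height_ge A P 1.
Proof.
move=> sA pP [y [Py y0]].
exists (fun i => if i == 0%N then (fun x => x = 0) else P); split.
- by move=> i _; case: (i == 0%N); [exact: zero_prime | done].
- move=> i; rewrite ltnS leqn0 => /eqP -> /=; split.
  + by move=> x ->; case: pP => [[_ ? _ _] _ _].
  + by exists y; split=> //; apply/eqP.
- by move=> x.
Qed.

Lemma mk_height2 (K : fieldType) (A c0 c1 c2 : K -> Prop) :
  prime_of A c0 -> prime_of A c1 -> prime_of A c2 ->
  strict_subset c0 c1 -> strict_subset c1 c2 -> height_ge A c2 2.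
Proof.
move=> p0 p1 p2 s01 s12.
exists (fun i => match i with 0 => c0 | 1 => c1 | _ => c2 end)%N; split.
- by case=> [|[|]].
- by case=> [|[|]].
- by move=> x.
Qed.

Lemma nz_contr (K : fieldType) (R S Q : K -> Prop) :
  frac_field_of R -> subset_of R S -> prime_of S Q ->
  (exists y, Q y /\ y != 0) -> exists a, contraction Q R a /\ a != 0.
Proof.
move=> [sR fr] RS [[_ _ _ Qmul] _ _] [y [Qy y0]].
have [a [b [Ra Rb b0 ey]]] := fr y.
exists a; have ea : a = b * y by rewrite ey mulrC divfK.
split; first by split=> //; rewrite ea; apply: Qmul => //; exact: RS.
by apply/eqP => a0; move: y0; rewrite ey a0 mul0r eqxx.
Qed.

Lemma uniq_over (K : fieldType) (R S p Q1 Q2 : K -> Prop) :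
  subset_of R S -> valuation_domain (localization R p) -> prime_of R p ->
  prime_of S Q1 -> prime_of S Q2 ->
  seteq (contraction Q1 R) p -> seteq (contraction Q2 R) p -> subset_of Q1 Q2.
Proof.
move=> RS val pp pQ1 pQ2 e1 e2 x Q1x.
case: pQ1 => [[Q1S Q10 _ Q1mul] _ _].
case: pQ2 => [[Q2S Q20 _ Q2mul] _ Q2p].
case: pp => [[pR p0 _ _] _ _].
case: (val x) => [[a [s [Ra Rs nps ex]]] | [a [s [Ra Rs nps ex]]]].
- have s0 : s != 0 by apply/eqP=> s0; apply: nps; rewrite s0.
  have ea : a = s * x by rewrite ex mulrC divfK.
  have pa : p a by apply: (e1 a).1; split=> //; rewrite ea; apply: Q1mul => //; exact: RS.
  have [Q2a _] := (e2 a).2 pa.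
  have Q2xs : Q2 (x * s) by rewrite mulrC -ea.
  case: (Q2p x s (Q1S _ Q1x) (RS _ Rs) Q2xs) => // Q2s.
  by exfalso; apply: nps; apply: (e2 s).1; split.
- case: (eqVneq x 0) => [->|x0] //; exfalso.
  have s0 : s != 0 by apply/eqP=> s0; apply: nps; rewrite s0.
  have es : x * a = s.
    have := mulfV x0; rewrite ex mulrA => /(congr1 (fun t => t * s)).
    by rewrite divfK // mul1r.
  apply: nps; apply: (e1 s).1; split=> //; rewrite -es mulrC.
  by apply: Q1mul => //; exact: RS.
Qed.

Lemma max_ideal (K : fieldType) (S I : K -> Prop) :
  subring S -> ideal_of S I -> ~ I 1 -> exists M, prime_of S M /\ subset_of I M.
Proof.
move=> sS [IS I0 Iadd Imul] nI1.
pose P := fun A : K -> Prop => [/\ subset_of A S,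
   (forall x y, A x -> A y -> A (x + y)),
   (forall a x, S a -> A x -> A (a * x)), ~ A 1 &
   ((exists x, A x) -> subset_of I A)].
have [|M [[MS Madd Mmul nM1 MI] Mmax]] := @classical_sets.Zorn_bigcup K P.
  move=> F FP Ftot; split.
  - by move=> x [X FX Xx]; have [XS _ _ _ _] := FP X FX; exact: XS.
  - move=> x y [X FX Xx] [Y FY Yy].
    case: (Ftot X Y FX FY) => sub.
      exists Y => //; have [_ Yadd _ _ _] := FP Y FY; exact: Yadd (sub _ Xx) Yy.
    exists X => //; have [_ Xadd _ _ _] := FP X FX; exact: Xadd Xx (sub _ Yy).
  - move=> a x Sa [X FX Xx]; exists X => //.
    by have [_ _ Xmul _ _] := FP X FX; exact: Xmul.
  - by move=> [X FX X1]; have [_ _ _ nX1 _] := FP X FX.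
  - move=> [x0 [X FX Xx0]] z Iz; exists X => //.
    by have [_ _ _ _ XI] := FP X FX; apply: XI => //; exists x0.
have Mne : exists x, M x.
  apply: NNPP => nM; apply: (Mmax I); last first.
    by split=> // _; move=> x.
  split; first by move=> x Mx; exfalso; apply: nM; exists x.
  move=> Hsub; apply: nM; exists 0; exact: Hsub.
have {}MI := MI Mne.
have M0 : M 0 by exact: MI.
have key : forall z, S z -> ~ M z -> exists m a, [/\ M m, S a & 1 = m + a * z].
  move=> z Sz nMz; apply: NNPP => nB.
  pose B := fun t => exists m a, [/\ M m, S a & t = m + a * z].
  apply: (Mmax B).
    split.
      by move=> m Mm; exists m, 0; split=> //; [case: sS | rewrite mul0r addr0].
    move=> BM; apply: nMz; apply: BM; exists 0, 1; split=> //; first by case: sS.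
    by rewrite add0r mul1r.
  split.
  - move=> t [m [a [Mm Sa ->]]]; apply: sr_add => //; first exact: MS.
    exact: sr_mul.
  - move=> t1 t2 [m1 [a1 [Mm1 Sa1 ->]]] [m2 [a2 [Mm2 Sa2 ->]]].
    exists (m1 + m2), (a1 + a2); split; [exact: Madd | exact: sr_add |].
    by rewrite mulrDl addrACA.
  - move=> b t Sb [m [a [Mm Sa ->]]]; exists (b * m), (b * a); split.
    + exact: Mmul.
    + exact: sr_mul.
    + by rewrite mulrDr mulrA.
  - by move=> [m [a [Mm Sa e]]]; apply: nB; exists m, a; split.
  - move=> _ x Ix; exists x, 0; split; [exact: MI | by case: sS | by rewrite mul0r addr0].
exists M; split=> //; split.
- by split=> // a x Sa Mx; exact: Mmul.
- done.
move=> x y Sx Sy Mxy; apply: NNPP => /not_or_and [nx ny].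
have [m1 [a [Mm1 Sa e1]]] := key x Sx nx.
have [m2 [b [Mm2 Sb e2]]] := key y Sy ny.
apply: nM1.
have -> : 1 = m1 * (m2 + b * y) + (a * x) * m2 + (a * b) * (x * y).
  rewrite -mulrACA -addrA -mulrDr -mulrDl.
  by rewrite -e2 mulr1 -e1.
apply: (Madd); first apply: (Madd).
- rewrite mulrC; apply: (Mmul) => //; apply: sr_add => //; [exact: MS | exact: (sr_mul sS Sb Sy)].
- by apply: (Mmul) => //; exact: (sr_mul sS Sa Sx).
- by apply: (Mmul) => //; exact: (sr_mul sS Sa Sb).
Qed.

Lemma sum_in (K : fieldType) (S : K -> Prop) (l : seq (K * K)) (f : K * K -> K) :
  subring S -> (forall z, z \in l -> S (f z)) -> S (\sum_(z <- l) f z).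
Proof.
move=> sS; elim: l => [|z l IH] Hl; first by rewrite big_nil; case: sS.
rewrite big_cons; apply: sr_add => //.
  by apply: Hl; rewrite inE eqxx.
by apply: IH => w wl; apply: Hl; rewrite inE wl orbT.
Qed.

Lemma ext_ideal (K : fieldType) (R S p : K -> Prop) :
  subring S -> subset_of R S -> prime_of R p -> ideal_of S (extension p S).
Proof.
move=> sS RS [[pR _ _ _] _ _]; split.
- move=> x [l [Hl ->]]; apply: sum_in => // z zl.
  by have [pz Sz] := Hl z zl; apply: sr_mul => //; apply: RS; apply: pR.
- by exists [::]; split=> //; rewrite big_nil.
- move=> x y [l1 [H1 ->]] [l2 [H2 ->]]; exists (l1 ++ l2); split.
    by move=> z; rewrite mem_cat => /orP[]; [apply: H1 | apply: H2].
  by rewrite big_cat.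
- move=> a x Sa [l [Hl ->]]; exists (map (fun z => (z.1, a * z.2)) l); split.
    move=> z /mapP [w wl ->] /=; have [pw Sw] := Hl w wl; split=> //.
    exact: sr_mul.
  by rewrite big_map mulr_sumr; apply: eq_bigr => z _ /=; rewrite mulrCA.
Qed.

Lemma ext_sub (K : fieldType) (R S p : K -> Prop) x :
  p x -> S 1 -> extension p S x.
Proof.
move=> px S1; exists [:: (x, 1)]; split; last by rewrite big_seq1 mulr1.
by move=> z; rewrite inE => /eqP ->.
Qed.

Arguments contr_prime {K R S Q}.
Arguments height1_nz {K A P}.
Arguments mk_height1 {K A P}.
Arguments mk_height2 {K A c0 c1 c2}.
Arguments nz_contr {K R S Q}.
Arguments uniq_over {K R S p Q1 Q2}.
Arguments max_ideal {K S I}.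
Arguments ext_ideal {K R S p}.
Arguments zero_prime {K A}.

Theorem proposition3p9 (K : fieldType) (R S : K -> Prop) :
  frac_field_of R -> overring R S -> going_down R S -> R1 R ->
  [/\ R1 S,
      (forall Q, height_one S Q -> height_one R (contraction Q R)),
      (forall Q1 Q2, height_one S Q1 -> height_one S Q2 ->
         seteq (contraction Q1 R) (contraction Q2 R) -> seteq Q1 Q2) &
      (forall p, height_one R p ->
         ((exists Q, height_one S Q /\ seteq (contraction Q R) p) <->
          ~ seteq (extension p S) S))].
Proof.
move=> [sR fr] [sS RS] gd r1.
have ffR : frac_field_of R by split.
have S1 : S 1 by case: sS.
have part2 : forall Q, height_one S Q -> height_one R (contraction Q R).
  move=> Q [pQ [h1 nh2]].
  have pq := contr_prime sR RS pQ.
  split=> //; split.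
    exact: (mk_height1 sR pq (nz_contr ffR RS pQ (height1_nz h1))).
  move=> [c [cp cs ce]].
  have p0 := cp 0%N isT; have p1 := cp 1%N isT; have p2 := cp 2%N isT.
  have [s01 w01] := cs 0%N isT; have [s12 w12] := cs 1%N isT.
  have [P1 [pP1 P1Q eP1]] :=
    gd (c 1%N) (c 2%N) Q p1 p2 s12 pQ (fun x => iff_sym (ce x)).
  have [P0 [pP0 P0P1 eP0]] := gd (c 0%N) (c 1%N) P1 p0 p1 s01 pP1 eP1.
  apply: nh2; apply: (mk_height2 pP0 pP1 pQ).
  - split=> //; case: w01 => x [c1x nc0x]; exists x; split.
      exact: ((eP1 x).2 c1x).1.
    move=> P0x; apply: nc0x; apply: (eP0 x).1; split=> //.
    by case: p1 => [[c1R _ _ _] _ _]; exact: c1R.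
  - split=> //; case: w12 => x [c2x nc1x]; exists x; split.
      exact: ((ce x).1 c2x).1.
    move=> P1x; apply: nc1x; apply: (eP1 x).1; split=> //.
    exact: ((ce x).1 c2x).2.
split=> //.
- move=> Q hQ x; have hq := part2 Q hQ.
  case: (r1 _ hq x) => [[a [s [Ra Rs nqs e]]]|[a [s [Ra Rs nqs e]]]];
    [left|right]; exists a, s; (split; [exact: RS | exact: RS | | exact: e]);
    by move=> Qs; apply: nqs; split.
- move=> Q1 Q2 h1 h2 e x; have hq := part2 Q1 h1; split.
    exact: (uniq_over RS (r1 _ hq) hq.1 h1.1 h2.1 (fun y => iff_refl _)
                      (fun y => iff_sym (e y))).
  exact: (uniq_over RS (r1 _ hq) hq.1 h2.1 h1.1 (fun y => iff_sym (e y))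
                    (fun y => iff_refl _)).
move=> p hp; have [[pR p0 _ _] _ _] := hp.1; split.
- move=> [Q [hQ eQ]] ext.
  have [[QS Q0 Qadd Qmul] nQ1 _] := hQ.1.
  apply: nQ1; have [l [Hl ->]] := (ext 1).2 S1.
  elim: l Hl => [|z l IH] Hl; rewrite ?big_nil ?big_cons //.
  apply: Qadd; last by apply: IH => w wl; apply: Hl; rewrite inE wl orbT.
  have [pz Sz] := Hl z (mem_head _ _).
  by rewrite mulrC; apply: Qmul => //; exact: ((eQ z.1).2 pz).1.
move=> next.
have idl := ext_ideal sS RS hp.1.
have n1 : ~ extension p S 1.
  move=> e1; apply: next => x; split; first by case: idl => ? _ _ _; auto.
  move=> Sx; rewrite -[x]mulr1; case: idl => _ _ _ Imul; exact: Imul.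
have [M [pM sub]] := max_ideal sS idl n1.
have pq := contr_prime sR RS pM.
have psub : subset_of p (contraction M R).
  by move=> x px; split; [apply: sub; exact: ext_sub | exact: pR].
have [P [pP PM eP]] := gd p (contraction M R) M hp.1 pq psub pM (fun x => iff_refl _).
exists P; split=> //; split=> //; split.
  apply: (mk_height1 sS pP); have [y [py y0]] := height1_nz hp.2.1.
  by exists y; split=> //; exact: ((eP y).2 py).1.
move=> [c [cp cs ce]].
have p0' := cp 0%N isT; have p1 := cp 1%N isT; have p2 := cp 2%N isT.
have [s01 w01] := cs 0%N isT; have [s12 w12] := cs 1%N isT.
have ny : exists y, c 1%N y /\ y != 0.
  case: w01 => x [c1x nc0x]; exists x; split=> //; apply/eqP => x0.
  by apply: nc0x; rewrite x0; case: p0' => [[_ ? _ _] _ _].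
have [a [[c1a Ra] a0]] := nz_contr ffR RS p1 ny.
have cp_sub : subset_of (contraction (c 1%N) R) p.
  move=> x [c1x Rx]; apply: (eP x).1; split=> //.
  by apply: (ce x).1; apply: s12.
have eq1 : seteq (contraction (c 1%N) R) p.
  move=> x; split; first exact: cp_sub.
  move=> px; apply: NNPP => nx.
  apply: hp.2.2; apply: (mk_height2 (zero_prime sR) (contr_prime sR RS p1) hp.1).
    split.
      move=> z ->; split; last by case: sR.
      by case: p1 => [[_ ? _ _] _ _].
    by exists a; split=> //; apply/eqP.
  by split=> //; exists x.
have Pc1 := uniq_over RS (r1 _ hp) hp.1 pP p1 eP eq1.
case: w12 => z [c2z nc1z]; apply: nc1z; apply: Pc1; exact: (ce z).1.
Qed.
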